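(* Let $r(x)$ and $s(x)$ be $\Sigma_m$-terms whose only variable (if any) is $x$, interpreted in $Q_0$. If $r(q)=s(q)$ for infinitely many rationals $q$, then $r(q)\neq s(q)$ for only finitely many rationals $q$.
   Context: $\Sigma_m=(0,1,+,\cdot,-,{}^{-1})$. $Q_0$ is the field of rational numbers with its usual $0,1,+,\cdot,-$ and with the total inverse defined by $q^{-1}=1/q$ for $q\neq 0$ and $0^{-1}=0$. (In the paper: $r\equiv_\infty s$ means agreement at infinitely many rationals, $r\equiv_{ae} s$ means disagreement at only finitely many rationals, and the claim is $r\equiv_\infty s\Rightarrow r\equiv_{ae} s$.) *)

(* Defs.v *)
From HB Require Import structures.
From mathcomp Require Import all_boot all_order all_algebra.
Set Implicit Arguments. Unset Strict Implicit. Unset Printing Implicit Defensive.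
Import Order.TTheory GRing.Theory Num.Theory.
Local Open Scope ring_scope.

(* Sigma_m = (0,1,+,*,-,^-1) terms in at most one variable x. *)
Inductive term : Type :=
  | tX : term
  | tZero : term
  | tOne : term
  | tAdd : term -> term -> term
  | tMul : term -> term -> term
  | tNeg : term -> term
  | tInv : term -> term.

(* total inverse on Q: q^-1 = 1/q for q <> 0, 0^-1 = 0 *)
Definition inv0 (q : rat) : rat := if q == 0 then 0 else 1 / q.

Fixpoint eval (t : term) (q : rat) : rat :=
  match t with
  | tX => q
  | tZero => 0
  | tOne => 1
  | tAdd a b => eval a q + eval b q
  | tMul a b => eval a q * eval b q
  | tNeg a => - eval a q
  | tInv a => inv0 (eval a q)
  end.

Definition finite_rat (P : rat -> Prop) : Prop :=
  exists l : seq rat, forall q, P q -> q \in l.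

(* Main.v *)
Require Import Defs.
From mathcomp Require Import all_boot all_order all_algebra.
From Stdlib Require Import Classical.
Import Order.TTheory GRing.Theory Num.Theory.
Local Open Scope ring_scope.

Lemma roots_list (p : {poly rat}) : p != 0 -> exists l : seq rat, forall x, root p x -> x \in l.
Proof.
move: {2}(size p) (leqnn (size p)) => n; elim: n p => [|n IH] p Hs Hp.
  by move: Hp; rewrite -size_poly_eq0; move: Hs; rewrite leqn0 => ->.
case: (classic (exists a, root p a)) => [[a Ha]|Hn]; last first.
  by exists [::] => x Hx; exfalso; apply: Hn; exists x.
case/factor_theorem: Ha => q Hq.
have q0 : q != 0 by apply: contraNneq Hp => q0; rewrite Hq q0 mul0r.
have : (size q <= n)%N.
  move: Hs; rewrite Hq size_mul // ?polyXsubC_eq0 // size_XsubC addn2 /=.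
  by [].
move=> /(IH q) /(_ q0) [l Hl]; exists (a :: l) => x.
rewrite Hq rootM root_XsubC in_cons => /orP [/Hl ->|->]; by rewrite ?orbT.
Qed.

Lemma rep (t : term) : exists (p q : {poly rat}) (l : seq rat), q != 0 /\
  forall x, x \notin l -> q.[x] != 0 /\ eval t x = p.[x] / q.[x].
Proof.
elim: t => /=.
- exists 'X, 1, [::]; split; first exact: oner_neq0.
  by move=> x _; rewrite hornerX hornerC divr1 oner_neq0.
- exists 0, 1, [::]; split; first exact: oner_neq0.
  by move=> x _; rewrite horner0 hornerC mul0r oner_neq0.
- exists 1, 1, [::]; split; first exact: oner_neq0.
  by move=> x _; rewrite hornerC divr1 oner_neq0.
- move=> a [p1 [q1 [l1 [H1 E1]]]] b [p2 [q2 [l2 [H2 E2]]]].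
  exists (p1 * q2 + p2 * q1), (q1 * q2), (l1 ++ l2); split; first by rewrite mulf_neq0.
  move=> x; rewrite mem_cat negb_or => /andP [x1 x2].
  case: (E1 x x1) => n1 ->; case: (E2 x x2) => n2 ->.
  by rewrite hornerD !hornerM mulf_neq0 // addf_div.
- move=> a [p1 [q1 [l1 [H1 E1]]]] b [p2 [q2 [l2 [H2 E2]]]].
  exists (p1 * p2), (q1 * q2), (l1 ++ l2); split; first by rewrite mulf_neq0.
  move=> x; rewrite mem_cat negb_or => /andP [x1 x2].
  case: (E1 x x1) => n1 ->; case: (E2 x x2) => n2 ->.
  by rewrite !hornerM mulf_neq0 // mulf_div.
- move=> a [p1 [q1 [l1 [H1 E1]]]].
  exists (- p1), q1, l1; split => // x x1.
  case: (E1 x x1) => n1 ->; by rewrite hornerN mulNr.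
- move=> a [p1 [q1 [l1 [H1 E1]]]].
  have [p10|p0] := eqVneq p1 0.
    exists 0, 1, l1; split; first exact: oner_neq0.
    move=> x x1; case: (E1 x x1) => n1 ->.
    rewrite p10 !horner0 hornerC !mul0r; split; [exact: oner_neq0 | by rewrite /Defs.inv0 eqxx].
  case: (@roots_list p1 p0) => lr Hr.
  exists q1, p1, (l1 ++ lr); split => // x.
  rewrite mem_cat negb_or => /andP [x1 x2].
  have px : p1.[x] != 0 by apply: contraNneq x2 => h; apply: Hr; apply/eqP.
  case: (E1 x x1) => n1 ->; split => //.
  by rewrite /Defs.inv0 mulf_eq0 invr_eq0 (negbTE px) (negbTE n1) /= div1r invf_div.
Qed.

Theorem theorem3 (r s : term) :
  ~ finite_rat (fun q => eval r q = eval s q) ->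
  finite_rat (fun q => eval r q <> eval s q).
Proof.
move=> Hinf.
case: (rep r) => [p1 [q1 [l1 [H1 E1]]]]; case: (rep s) => [p2 [q2 [l2 [H2 E2]]]].
have [D0|Dn] := eqVneq (p1 * q2 - p2 * q1) 0.
  exists (l1 ++ l2) => x Hne; apply/negPn/negP; rewrite mem_cat negb_or => /andP [x1 x2].
  apply: Hne; case: (E1 x x1) => n1 ->; case: (E2 x x2) => n2 ->.
  apply/eqP; rewrite eqr_div //; apply/eqP.
  have := congr1 (fun P => P.[x]) D0; rewrite /= !hornerE => /eqP.
  by rewrite subr_eq0 => /eqP.
exfalso; apply: Hinf.
case: (roots_list _ Dn) => lr Hr.
exists (l1 ++ l2 ++ lr) => x Heq; apply/negPn/negP; rewrite !mem_cat !negb_or => /and3P [x1 x2 x3].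
apply: (negP x3); apply: Hr; apply/eqP.
move: Heq; case: (E1 x x1) => n1 ->; case: (E2 x x2) => n2 -> /eqP.
rewrite eqr_div // => /eqP h; by rewrite !hornerE h subrr.
Qed.
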